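(* Let $S$ be a finite set, $\Delta$ a nonnegative integer, and $w:S\to\{-\Delta,\dots,\Delta\}$ integer weights with $|w(S)|=\mu$, where $w(S)=\sum_{s\in S}w(s)$. Let $S^+=\{s\in S: w(s)\ge 0\}$. Let $S_1,\dots,S_\ell$ be a partitioning of $S$ into subsets. Then there exists an index $i$ such that \[ |S^+\cap S_i|\ge\frac{|S|-\mu}{\ell\cdot(\Delta+1)}. \] *)

(* Defs.v *)
From mathcomp Require Import all_boot all_order all_algebra.
Set Implicit Arguments. Unset Strict Implicit. Unset Printing Implicit Defensive.
Import Order.TTheory GRing.Theory Num.Theory.

Definition pos_part (T : finType) (S : {set T}) (w : T -> int) : {set T} :=
  [set s in S | (0 <= w s)%R].

(* Main.v *)
Require Import Defs.
From mathcomp Require Import all_boot all_order all_algebra.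
From mathcomp Require Import ring lra.
Import Order.TTheory GRing.Theory Num.Theory.
Local Open Scope ring_scope.

Lemma card_bigcup_le (T : finType) (I : Type) (r : seq I) (F : I -> {set T}) :
  (#|\bigcup_(i <- r) F i| <= \sum_(i <- r) #|F i|)%N.
Proof.
elim: r => [|a r IH]; first by rewrite !big_nil cards0.
rewrite !big_cons; apply: leq_trans (leq_card_setU _ _) _.
by rewrite leq_add2l.
Qed.

Lemma key (T : finType) (S : {set T}) (Delta : nat) (w : T -> int) (mu : nat)
    (hw : forall s, s \in S -> `|w s| <= Delta%:Z)
    (hmu : `|\sum_(s in S) w s| = mu%:Z) :
  (#|S|%:Z - mu%:Z <= (Delta%:Z + 1) * #|pos_part S w|%:Z).
Proof.
have pt : forall s, s \in S ->
    1 - (Delta%:Z + 1) * (s \in pos_part S w)%:R <= - w s.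
  move=> s sS; have := hw s sS; rewrite inE sS /=.
  case: (lerP 0 (w s)) => h /=.
    rewrite ger0_norm // => h1; lra.
  move=> _.
  have : w s <= -1 by rewrite -ltzD1 addrC subrr.
  lra.
have := ler_sum (index_enum T) pt.
rewrite sumrB -big_distrr /= sumr_const.
rewrite sumrN.
have -> : \sum_(s in S) ((s \in pos_part S w)%:R : int) = #|pos_part S w|%:Z.
  rewrite -sum1_card -[X in _ = X]natz natr_sum.
  rewrite (big_setID (pos_part S w)) /=.
  rewrite [X in _ + X]big1; last first.
    by move=> s; rewrite inE => /andP [/negPf ->].
  rewrite addr0.
  have -> : S :&: pos_part S w = pos_part S w.
    by apply/setIidPr; apply/subsetP => s; rewrite inE => /andP [].
  by apply: eq_bigr => s ->.
have h1 : - \sum_(s in S) w s <= mu%:Z.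
  by rewrite -hmu -normrN ler_norm.
move=> h2.
have : (#|S|%:Z - (Delta%:Z + 1) * #|pos_part S w|%:Z) <= mu%:Z.
  apply: le_trans h1; apply: le_trans h2.
  by rewrite natz.
lra.
Qed.

Theorem proposition7 (T : finType) (S : {set T}) (Delta : nat) (w : T -> int)
    (mu : nat) (l : nat) (Sp : 'I_l -> {set T})
    (hw : forall s, s \in S -> `|w s| <= Delta%:Z)
    (hmu : `|\sum_(s in S) w s| = mu%:Z)
    (hl : (0 < l)%N)
    (hdisj : forall i j : 'I_l, i != j -> [disjoint Sp i & Sp j])
    (hcover : \bigcup_(i < l) Sp i = S) :
  exists i : 'I_l,
    ((#|S|%:R - mu%:R) / (l%:R * (Delta%:R + 1)) : rat)
      <= #|pos_part S w :&: Sp i|%:R.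
Proof.
set P := pos_part S w.
have hk := @key T S Delta w mu hw hmu.
have hP : (#|P| <= \sum_(i < l) #|P :&: Sp i|)%N.
  apply: leq_trans _ (card_bigcup_le _ _ (index_enum 'I_l) (fun i => P :&: Sp i)).
  apply: subset_leq_card; apply/subsetP => s sP.
  have sS : s \in S by move: sP; rewrite inE => /andP [].
  move: sS; rewrite -hcover => /bigcupP [i _ si].
  apply/bigcupP; exists i => //.
  by rewrite inE sP si.
have hkQ : (#|S|%:R - mu%:R : rat) <= (Delta%:R + 1) * #|P|%:R.
  have := hk; rewrite -(ler_int rat) /= !rmorphB /= !rmorphM /= rmorphD /=.
  by rewrite !pmulrn rmorph1.
have hPQ : (#|P|%:R : rat) <= \sum_(i < l) (#|P :&: Sp i|%:R : rat).
  by rewrite -natr_sum ler_nat.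
apply/existsP; apply: contraT => /existsPn hall.
set x := ((#|S|%:R - mu%:R) / (l%:R * (Delta%:R + 1)) : rat).
have hlt : \sum_(i < l) (#|P :&: Sp i|%:R : rat) < \sum_(i < l) x.
  apply: ltr_sum; first by apply/hasP; exists (Ordinal hl); rewrite ?mem_index_enum.
  by move=> i _; rewrite ltNge; apply: hall.
rewrite sumr_const card_ord in hlt.
have lpos : (0 : rat) < l%:R by rewrite ltr0n.
have dpos : (0 : rat) < Delta%:R + 1 by rewrite ltr_wpDl.
have : x *+ l = (#|S|%:R - mu%:R) / (Delta%:R + 1).
  rewrite /x -mulr_natr; field; rewrite ?lt0r_neq0 // ?mulf_neq0 ?lt0r_neq0 //.
move=> ex; rewrite ex in hlt.
have : (#|S|%:R - mu%:R : rat) / (Delta%:R + 1) <= #|P|%:R.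
  by rewrite ler_pdivrMr // mulrC.
lra.
Qed.
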